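(* Let $n$ be an integer, $g(m)=10^{m/5}$, and for real $x$ with $2\le x\le n-2$ let $p(x)=(x-1)g(n-1-x)+g(n-2-x)$. Then $p$ is decreasing on $[3,n-2]$, and \[ p(3)=\max\{p(x): x\in\mathbb{Z}^+,\ 2\le x\le n-2\}. \] *)

(* Defs.v *)
From Stdlib Require Import Reals Lra Lia ZArith.
Open Scope R_scope.

Definition g (m : R) : R := Rpower 10 (m / 5).

Definition p (n : Z) (x : R) : R :=
  (x - 1) * g (IZR n - 1 - x) + g (IZR n - 2 - x).

(* Main.v *)
Require Import Defs.
From Stdlib Require Import Reals ZArith.
From Stdlib Require Import Lra Lia.
Open Scope R_scope.

Definition aa := exp (- (ln 10 / 5)).

Lemma p_form n x : p n x = exp ((IZR n - 1 - x) / 5 * ln 10) * (x - 1 + aa).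
Proof.
  unfold p, g, Rpower, aa.
  replace ((IZR n - 2 - x) / 5 * ln 10) with ((IZR n - 1 - x) / 5 * ln 10 + - (ln 10 / 5)) by field.
  rewrite exp_plus. ring.
Qed.

Lemma L_gt2 : 2 < ln 10.
Proof.
  rewrite <- (ln_exp 2). apply ln_increasing. apply exp_pos.
  replace 2 with (1+1) by ring. rewrite exp_plus.
  pose proof exp_le_3. pose proof (exp_pos 1). nra.
Qed.

Lemma aa_pos : 0 < aa.
Proof. apply exp_pos. Qed.

Lemma aa5 : aa ^ 5 = / 10.
Proof.
  unfold aa.
  replace (exp (- (ln 10 / 5)) ^ 5) with (exp (5 * (- (ln 10 / 5)))).
  - replace (5 * - (ln 10 / 5)) with (- ln 10) by field.
    rewrite exp_Ropp, exp_ln by lra. reflexivity.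
  - set (z := - (ln 10 / 5)). replace (5 * z) with (z+z+z+z+z) by ring.
    rewrite !exp_plus. simpl. ring.
Qed.

Lemma aa_big : 0.62 < aa.
Proof.
  pose proof aa5. pose proof aa_pos.
  destruct (Rlt_or_le 0.62 aa) as [h|h]; auto.
  exfalso.
  assert (aa ^ 5 <= 0.62 ^ 5) by (apply pow_incr; lra).
  rewrite H in H1. lra.
Qed.

Lemma exp_shift n x y :
  exp ((IZR n - 1 - x) / 5 * ln 10) = exp ((IZR n - 1 - y) / 5 * ln 10) * exp ((y - x) / 5 * ln 10).
Proof. rewrite <- exp_plus. f_equal. field. Qed.

Theorem lemma2p9 (n : Z) (hn : (5 <= n)%Z) :
  (forall x y : R, 3 <= x -> x < y -> y <= IZR n - 2 -> p n y < p n x) /\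
  ((2 <= 3 <= n - 2)%Z /\
   forall k : Z, (2 <= k)%Z -> (k <= n - 2)%Z -> p n (IZR k) <= p n 3).
Proof.
  pose proof L_gt2 as HL. pose proof aa_big as Ha.
  assert (mono : forall x y : R, 3 <= x -> x < y -> p n y < p n x).
  { intros x y hx hxy.
    rewrite !p_form. rewrite (exp_shift n x y).
    set (E := exp ((IZR n - 1 - y) / 5 * ln 10)).
    assert (hE : 0 < E) by apply exp_pos.
    set (d := (y - x) / 5 * ln 10).
    assert (hd : 0 < d) by (unfold d; apply Rmult_lt_0_compat; lra).
    pose proof (exp_ineq1 d ltac:(lra)).
    assert (y - x <= d * (x - 1 + aa)).
    { unfold d. assert (0 < y - x) by lra.
      assert (1 <= ln 10 / 5 * (x - 1 + aa)) by nra.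
      replace ((y - x) / 5 * ln 10 * (x - 1 + aa)) with ((y - x) * (ln 10 / 5 * (x - 1 + aa))) by field.
      nra. }
    apply Rmult_lt_compat_l with (r := E) in H; [|exact hE].
    nra. }
  split; [intros; apply mono; lra|].
  split; [lia|].
  intros k hk1 hk2.
  destruct (Z.eq_dec k 2) as [->|hk].
  - rewrite !p_form. rewrite (exp_shift n 2 3).
    replace ((3 - 2) / 5 * ln 10) with (- - (ln 10 / 5)) by field.
    rewrite exp_Ropp. fold aa.
    pose proof aa_pos.
    set (E := exp ((IZR n - 1 - 3) / 5 * ln 10)).
    assert (0 < E) by apply exp_pos.
    assert (/ aa * (2 - 1 + aa) <= 3 - 1 + aa).
    { apply Rmult_le_reg_l with aa; [lra|]. rewrite <- Rmult_assoc, Rinv_r by lra. nra. }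
    replace (E * / aa * (2 - 1 + aa)) with (E * (/ aa * (2 - 1 + aa))) by ring.
    apply Rmult_le_compat_l; lra.
  - destruct (Z.eq_dec k 3) as [->|hk3]; [lra|].
    left. apply mono; [lra|]. apply IZR_lt. lia.
Qed.
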